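(* Let $k$ be an algebraically closed field of characteristic zero, $n\ge1$, $q\in k$ a primitive $2n$-th root of unity, $a\in k\setminus\{0\}$, and let $\mathfrak wH_{4n}$ be the algebra generated by $Z,X$ with $Z^{2n+1}=Z$, $ZX=qXZ$, $X^2=0$. For $i\in\mathbb Z_{2n}$ let $S_i$ be the $1$-dimensional module with $X$ acting by $0$ and $Z$ by $q^i$; let $M_i$ be the $2$-dimensional module with basis $v_1^i,v_2^i$, $Xv_1^i=v_2^i$, $Xv_2^i=0$, $Zv_1^i=q^iv_1^i$, $Zv_2^i=q^{i+1}v_2^i$. Let $N_0$ be the $1$-dimensional module on which $Z$ and $X$ act by $0$, and $N_1$ the $2$-dimensional module with basis $w_1,w_2$, $Xw_1=w_2$, $Xw_2=0$, $Zw_1=Zw_2=0$. Then $\{S_i,M_i\mid i\in\mathbb Z_{2n}\}\cup\{N_0,N_1\}$ is a complete list of pairwise non-isomorphic finite-dimensional indecomposable $\mathfrak wH_{4n}$-modules. *)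

(* Defs.v *)
From HB Require Import structures.
From mathcomp Require Import all_boot all_order all_algebra.
Set Implicit Arguments. Unset Strict Implicit. Unset Printing Implicit Defensive.
Import GRing.Theory.
Local Open Scope ring_scope.

(* Convention: a d-dimensional module over wH_{4n} is k^d (column vectors)
   together with the matrices Z, X : 'M_d by which the generators act
   (v |-> Z *m v, v |-> X *m v). *)

(* m-th power of a square matrix (works also for d = 0). *)
Definition mxpow (k : nzRingType) (d : nat) (A : 'M[k]_d) (m : nat) : 'M[k]_d :=
  iter m (mulmx A) 1%:M.

Definition wHmod (k : nzRingType) (n : nat) (q : k) (d : nat) (Z X : 'M[k]_d) : Prop :=
  [/\ mxpow Z (2 * n + 1) = Z, Z *m X = q *: (X *m Z) & X *m X = 0].

Definition mod_iso (k : nzRingType) (d1 d2 : nat)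
  (Z1 X1 : 'M[k]_d1) (Z2 X2 : 'M[k]_d2) : Prop :=
  exists (P : 'M[k]_(d1, d2)) (Q : 'M[k]_(d2, d1)),
    [/\ P *m Q = 1%:M, Q *m P = 1%:M, Z1 *m P = P *m Z2 & X1 *m P = P *m X2].

Definition mod_decomposable (k : nzRingType) (n : nat) (q : k) (d : nat) (Z X : 'M[k]_d) : Prop :=
  exists (d1 d2 : nat) (Z1 X1 : 'M[k]_d1) (Z2 X2 : 'M[k]_d2),
    [/\ (0 < d1)%N, (0 < d2)%N, wHmod n q Z1 X1, wHmod n q Z2 X2 &
        mod_iso Z X (block_mx Z1 0 0 Z2) (block_mx X1 0 0 X2)].

Definition mod_indecomposable (k : nzRingType) (n : nat) (q : k) (d : nat) (Z X : 'M[k]_d) : Prop :=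
  [/\ wHmod n q Z X, (0 < d)%N & ~ mod_decomposable n q Z X].

Definition S_Z (k : nzRingType) (q : k) (i : nat) : 'M[k]_1 := (q ^+ i)%:M.
Definition S_X (k : nzRingType) : 'M[k]_1 := 0.
(* M_i : basis v1 = e_0, v2 = e_1; X v1 = v2, X v2 = 0, Z v1 = q^i v1, Z v2 = q^(i+1) v2 *)
Definition M_Z (k : nzRingType) (q : k) (i : nat) : 'M[k]_2 :=
  \matrix_(r < 2, c < 2) (if r == c then q ^+ (i + r) else 0).
Definition M_X (k : nzRingType) : 'M[k]_2 :=
  \matrix_(r < 2, c < 2) (if (r == 1 :> nat) && (c == 0 :> nat) then 1 else 0).
Definition N0_Z (k : nzRingType) : 'M[k]_1 := 0.
Definition N0_X (k : nzRingType) : 'M[k]_1 := 0.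
Definition N1_Z (k : nzRingType) : 'M[k]_2 := 0.
Definition N1_X (k : nzRingType) : 'M[k]_2 := M_X k.

(* Main.v *)
Require Import Defs.
From HB Require Import structures.
From mathcomp Require Import all_boot all_order all_algebra.
Import GRing.Theory.
Local Open Scope ring_scope.

Module Helpers.
Set Implicit Arguments. Unset Strict Implicit.


Section Gen.
Variable k : fieldType.

Lemma iso_dim d1 d2 (Z1 X1 : 'M[k]_d1) (Z2 X2 : 'M[k]_d2) :
  mod_iso Z1 X1 Z2 X2 -> d1 = d2.
Proof.
case=> P [Q [PQ QP _ _]]; apply/eqP; rewrite eqn_leq.
by rewrite (mulmx1_min PQ) (mulmx1_min QP).
Qed.

Lemma factor_idem d (F : 'M[k]_d) : F *m F = F ->
  exists r (P : 'M[k]_(d, r)) (Q : 'M[k]_(r, d)), Q *m P = 1%:M /\ P *m Q = F.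
Proof.
move=> FF; set r := \rank F.
have rd : (r <= d)%N by apply: rank_leq_row.
set L := col_ebase F; set U := row_ebase F.
pose P : 'M[k]_(d, r) := L *m pid_mx r.
pose Q : 'M[k]_(r, d) := pid_mx r *m U.
exists r, P, Q.
have PQ : P *m Q = F.
  by rewrite /P /Q mulmxA -(mulmxA L) pid_mx_id // mulmx_ebase.
pose Lp : 'M[k]_(r, d) := pid_mx r *m invmx L.
pose Uq : 'M[k]_(d, r) := invmx U *m pid_mx r.
have LpP : Lp *m P = 1%:M.
  by rewrite /Lp /P !mulmxA -(mulmxA (pid_mx r) (invmx L)) mulVmx ?col_ebase_unit // mulmx1 pid_mx_id // pid_mx_1.
have QUq : Q *m Uq = 1%:M.
  by rewrite /Q /Uq !mulmxA -(mulmxA (pid_mx r) U (invmx U)) mulmxV ?row_ebase_unit // mulmx1 pid_mx_id // pid_mx_1.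
split=> //.
move: (P) (Q) (Lp) (Uq) PQ LpP QUq => P1 Q1 Lp1 Uq1 PQ1 LpP1 QUq1.
have -> : Q1 *m P1 = Lp1 *m (P1 *m Q1 *m (P1 *m Q1)) *m Uq1.
  by rewrite !mulmxA LpP1 mul1mx -!mulmxA QUq1 mulmx1.
by rewrite PQ1 FF -PQ1 !mulmxA LpP1 mul1mx QUq1.
Qed.

Lemma sandwich d m (P : 'M[k]_(d, m)) (Q : 'M[k]_(m, d)) (A B : 'M[k]_d) :
  Q *m P = 1%:M -> A *m (P *m Q) = (P *m Q) *m A ->
  Q *m A *m P *m (Q *m B *m P) = Q *m (A *m B) *m P.
Proof.
move=> QP AE.
have QAE : Q *m A *m (P *m Q) = Q *m A.
  by rewrite -mulmxA AE !mulmxA QP mul1mx.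
by rewrite !mulmxA -(mulmxA (Q *m A) P Q) QAE.
Qed.

Lemma intertw d m (P : 'M[k]_(d, m)) (Q : 'M[k]_(m, d)) (A : 'M[k]_d) :
  Q *m P = 1%:M -> A *m (P *m Q) = (P *m Q) *m A -> A *m P = P *m (Q *m A *m P).
Proof.
move=> QP AE; rewrite !mulmxA -AE -!mulmxA QP mulmx1 //.
Qed.

Lemma mxpow_sand d m (P : 'M[k]_(d, m)) (Q : 'M[k]_(m, d)) (A : 'M[k]_d) j :
  Q *m P = 1%:M -> A *m (P *m Q) = (P *m Q) *m A ->
  mxpow (Q *m A *m P) j = Q *m mxpow A j *m P.
Proof.
move=> QP AE; elim: j => [|j IH]; first by rewrite /mxpow /= mulmx1 QP.
by rewrite /mxpow /= -/(mxpow _ _) IH sandwich.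
Qed.

Lemma wH_sand n (q : k) d m (P : 'M[k]_(d, m)) (Q : 'M[k]_(m, d)) (Z X : 'M[k]_d) :
  wHmod n q Z X -> Q *m P = 1%:M ->
  Z *m (P *m Q) = (P *m Q) *m Z -> X *m (P *m Q) = (P *m Q) *m X ->
  wHmod n q (Q *m Z *m P) (Q *m X *m P).
Proof.
case=> [hp hzx hxx] QP ZE XE; split.
- by rewrite mxpow_sand // hp.
- by rewrite !sandwich // hzx -scalemxAr -scalemxAl.
- by rewrite sandwich // hxx mulmx0 mul0mx.
Qed.

Lemma decomp n (q : k) d (Z X E : 'M[k]_d) : wHmod n q Z X ->
  E *m E = E -> Z *m E = E *m Z -> X *m E = E *m X -> E != 0 -> E != 1%:M ->
  mod_decomposable n q Z X.
Proof.
move=> hw EE ZE XE E0 E1.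
have [r1 [P1 [Q1 [QP1 PQ1]]]] := factor_idem EE.
have FF : (1%:M - E) *m (1%:M - E) = 1%:M - E.
  by rewrite mulmxBl mul1mx mulmxBr mulmx1 EE subrr subr0.
have [r2 [P2 [Q2 [QP2 PQ2]]]] := factor_idem FF.
have ZF : Z *m (1%:M - E) = (1%:M - E) *m Z by rewrite mulmxBr mulmxBl mulmx1 mul1mx ZE.
have XF : X *m (1%:M - E) = (1%:M - E) *m X by rewrite mulmxBr mulmxBl mulmx1 mul1mx XE.
have Q1P2 : Q1 *m P2 = 0.
  have -> : Q1 *m P2 = Q1 *m P1 *m Q1 *m (P2 *m Q2) *m P2.
    by rewrite QP1 mul1mx -!mulmxA QP2 mulmx1.
  by rewrite -(mulmxA Q1 P1) PQ1 PQ2 -(mulmxA Q1) mulmxBr mulmx1 EE subrr mulmx0 mul0mx.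
have Q2P1 : Q2 *m P1 = 0.
  have -> : Q2 *m P1 = Q2 *m P2 *m Q2 *m (P1 *m Q1) *m P1.
    by rewrite QP2 mul1mx -!mulmxA QP1 mulmx1.
  by rewrite -(mulmxA Q2 P2) PQ1 PQ2 -(mulmxA Q2) mulmxBl mul1mx EE subrr mulmx0 mul0mx.
exists r1, r2, (Q1 *m Z *m P1), (Q1 *m X *m P1), (Q2 *m Z *m P2), (Q2 *m X *m P2).
split.
- case: r1 P1 Q1 QP1 PQ1 {Q1P2 Q2P1} => // P1 Q1 _ PQ1.
  by move: E0; rewrite -PQ1 thinmx0 mul0mx eqxx.
- case: r2 P2 Q2 QP2 PQ2 {Q1P2 Q2P1} => // P2 Q2 _ PQ2.
  by move: E1; rewrite -subr_eq0 -opprB oppr_eq0 -PQ2 thinmx0 mul0mx eqxx.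
- by apply: wH_sand; rewrite // PQ1.
- by apply: wH_sand; rewrite // PQ2.
exists (row_mx P1 P2), (col_mx Q1 Q2); split.
- by rewrite mul_row_col PQ1 PQ2 addrC subrK.
- by rewrite mul_col_row QP1 QP2 Q1P2 Q2P1 -scalar_mx_block.
- rewrite mul_mx_row mul_row_block !mulmx0 addr0 add0r.
  by rewrite -(intertw QP1) ?PQ1 // -(intertw QP2) ?PQ2.
- rewrite mul_mx_row mul_row_block !mulmx0 addr0 add0r.
  by rewrite -(intertw QP1) ?PQ1 // -(intertw QP2) ?PQ2.
Qed.
End Gen.


Section L.
Variable k : fieldType.

Lemma mxpow_scalar m (a : k) j : mxpow (a%:M : 'M_m) j = (a ^+ j)%:M.
Proof.
elim: j => [|j IH]; first by rewrite expr0.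
by rewrite /mxpow /= -/(mxpow _ _) IH -scalar_mxM exprS.
Qed.

Lemma mxpow_block m1 m2 (A : 'M[k]_m1) (B : 'M[k]_m2) j :
  mxpow (block_mx A 0 0 B) j = block_mx (mxpow A j) 0 0 (mxpow B j).
Proof.
elim: j => [|j IH]; first by rewrite /mxpow /= -scalar_mx_block.
rewrite /mxpow /= -!/(mxpow _ _) IH mulmx_block.
by rewrite !mulmx0 !mul0mx !addr0 !add0r.
Qed.

Lemma mxpow0 m j : mxpow (0 : 'M[k]_m) j.+1 = 0.
Proof. by rewrite /mxpow /= mul0mx. Qed.

Lemma ord2_cases (r : 'I_(1 + 1)) : r = lshift 1 ord0 \/ r = rshift 1 ord0.
Proof.
case: r => [[|[|r]] hr]; [left | right | by []]; exact: val_inj.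
Qed.

Lemma M_ZE (q : k) (i : nat) :
  M_Z q i = block_mx (q ^+ i)%:M 0 0 (q ^+ (i + 1))%:M :> 'M_(1 + 1).
Proof.
apply/matrixP=> r c.
case: (ord2_cases r) => ->; case: (ord2_cases c) => ->;
  rewrite ?block_mxEul ?block_mxEur ?block_mxEdl ?block_mxEdr !mxE /= ?addn0 //.
Qed.

Lemma M_XE : M_X k = block_mx 0 0 1%:M 0 :> 'M_(1 + 1).
Proof.
apply/matrixP=> r c.
case: (ord2_cases r) => ->; case: (ord2_cases c) => ->;
  rewrite ?block_mxEul ?block_mxEur ?block_mxEdl ?block_mxEdr !mxE /= //.
Qed.


Lemma sq0_1 (A : 'M[k]_1) : A *m A = 0 -> A = 0.
Proof.
rewrite [A]mx11_scalar -scalar_mxM => /matrixP/(_ ord0 ord0).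
rewrite !mxE /= mulr1n => /eqP; rewrite mulf_eq0 orbb => /eqP->.
by rewrite raddf0.
Qed.

Lemma scal_iso d1 d2 (a b : k) (P : 'M[k]_(d1, d2)) (Q : 'M[k]_(d2, d1)) :
  (0 < d1)%N -> P *m Q = 1%:M -> a *: P = b *: P -> a = b.
Proof.
case: d1 P Q => // d1 P Q _ PQ /(congr1 (mulmx^~ Q)).
rewrite -!scalemxAl PQ !scalemx1 => /matrixP/(_ ord0 ord0).
by rewrite !mxE /= !mulr1n.
Qed.

Variables (n : nat) (q : k).
Hypothesis hn : (1 <= n)%N.
Hypothesis hq : (2 * n).-primitive_root q.

Lemma q_neq0 : q != 0.
Proof. by rewrite (prim_root_eq0 hq) muln_eq0 /= -lt0n hn. Qed.

Lemma qn1 : q ^+ (2 * n) = 1.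
Proof. exact: prim_expr_order hq. Qed.

Lemma q_neq1 : q != 1.
Proof.
apply/eqP=> q1; have := prim_order_dvd hq 1; rewrite expr1 q1 eqxx dvdn1.
by rewrite muln_eq1 andbC; move: hn; case: n => [|[|]].
Qed.

Lemma powS (i : nat) : (q ^+ i) ^+ (2 * n + 1) = q ^+ i.
Proof. by rewrite addn1 exprS exprAC qn1 expr1n mulr1. Qed.

Lemma wH_S i : wHmod n q (S_Z q i) (S_X k).
Proof.
split; rewrite /S_Z /S_X ?mxpow_scalar ?powS //.
- by rewrite mulmx0 mul0mx scaler0.
- by rewrite mulmx0.
Qed.

Lemma wH_M i : wHmod n q (M_Z q i) (M_X k).
Proof.
change (@wHmod k n q (1 + 1) (M_Z q i) (M_X k)).
rewrite M_ZE M_XE; split.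
- by rewrite mxpow_block !mxpow_scalar !powS.
- rewrite !mulmx_block !mulmx0 !mul0mx !mulmx1 !mul1mx !addr0 !add0r.
  by rewrite scale_block_mx !scaler0 scale_scalar_mx (addn1 i) exprS.
- by rewrite !mulmx_block !mulmx0 !mul0mx !addr0 block_mx0.
Qed.

Lemma wH_N0 : wHmod n q (N0_Z k) (N0_X k).
Proof.
split; rewrite /N0_Z /N0_X ?addn1 ?mxpow0 ?mulmx0 ?mul0mx ?scaler0 //.
Qed.

Lemma wH_N1 : wHmod n q (N1_Z k) (N1_X k).
Proof.
rewrite /N1_Z /N1_X; change (@wHmod k n q (1 + 1) 0 (M_X k)).
rewrite M_XE; split; rewrite ?addn1 ?mxpow0 ?mulmx0 ?mul0mx ?scaler0 //.
by rewrite !mulmx_block !mulmx0 !mul0mx !addr0 block_mx0.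
Qed.

Lemma indec1 (Z X : 'M[k]_1) : wHmod n q Z X -> mod_indecomposable n q Z X.
Proof.
move=> h; split=> // [[d1 [d2 [Z1 [X1 [Z2 [X2 [h1 h2 _ _ /iso_dim]]]]]]]].
by case: d1 d2 h1 h2 {Z1 X1 Z2 X2} => [|d1] [|d2] //= _ _; rewrite addnS.
Qed.

Lemma indec2 (Z X : 'M[k]_2) : wHmod n q Z X -> X != 0 -> mod_indecomposable n q Z X.
Proof.
move=> h X0; split=> // [[d1 [d2 [Z1 [X1 [Z2 [X2 [h1 h2 w1 w2 iso]]]]]]]].
have := iso_dim iso.
case: d1 d2 Z1 X1 Z2 X2 h1 h2 w1 w2 iso => [|[|d1]] [|[|d2]] //= Z1 X1 Z2 X2 _ _ w1 w2;
  move=> iso /eqP; rewrite ?addnS ?addSn //= ?addn0 => //.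
case: w1 w2 => [_ _ /sq0_1 e1] [_ _ /sq0_1 e2].
case: iso => P [Q [PQ QP _ XP]].
move: XP; rewrite e1 e2 block_mx0 mulmx0 => /(congr1 (mulmx^~ Q)).
by rewrite -mulmxA PQ mulmx1 mul0mx => X00; rewrite X00 eqxx in X0.
Qed.


Lemma S_inj (i j : 'I_(2 * n)) : mod_iso (S_Z q i) (S_X k) (S_Z q j) (S_X k) -> i = j.
Proof.
case=> P [Q [PQ _ ZP _]]; move: ZP; rewrite /S_Z mul_scalar_mx mul_mx_scalar.
move/(scal_iso (ltn0Sn 0) PQ)/eqP; rewrite (eq_prim_root_expr hq) !modn_small //.
by move/eqP/val_inj.
Qed.

Lemma ZX_M i : M_Z q i *m M_X k = q ^+ (i + 1) *: M_X k.
Proof.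
change (@mulmx k (1 + 1) (1 + 1) (1 + 1) (M_Z q i) (M_X k) = q ^+ (i + 1) *: (M_X k : 'M_(1 + 1))).
rewrite M_ZE M_XE !mulmx_block !mulmx0 !mul0mx !mulmx1 !addr0 !add0r.
by rewrite scale_block_mx !scaler0 scalemx1.
Qed.

Lemma M_inj (i j : 'I_(2 * n)) : mod_iso (M_Z q i) (M_X k) (M_Z q j) (M_X k) -> i = j.
Proof.
case=> P [Q [PQ _ ZP XP]].
have : q ^+ (i + 1) *: (M_X k *m P) = q ^+ (j + 1) *: (M_X k *m P).
  by rewrite scalemxAl -ZX_M -mulmxA XP mulmxA ZP -mulmxA ZX_M -scalemxAr.
move/(congr1 (mulmx^~ Q)); rewrite -!scalemxAl -!mulmxA PQ mulmx1.
move/matrixP/(_ 1 0); rewrite !mxE /= !mulr1 => /eqP.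
rewrite (eq_prim_root_expr hq) eqn_modDr !modn_small //.
by move/eqP/val_inj.
Qed.

Lemma S_not_N0 i : ~ mod_iso (S_Z q i) (S_X k) (N0_Z k) (N0_X k).
Proof.
case=> P [Q [PQ _ ZP _]]; move: ZP; rewrite /S_Z /N0_Z mul_scalar_mx mulmx0.
rewrite -(scale0r P) => /(scal_iso (ltn0Sn 0) PQ)/eqP.
by rewrite expf_eq0 (negbTE q_neq0) andbF.
Qed.

Lemma M_not_N1 i : ~ mod_iso (M_Z q i) (M_X k) (N1_Z k) (N1_X k).
Proof.
case=> P [Q [PQ _ ZP _]]; move: ZP; rewrite /N1_Z mulmx0 => /(congr1 (mulmx^~ Q)).
rewrite -mulmxA PQ mulmx1 mul0mx => /matrixP/(_ 0 0); rewrite !mxE /= addn0.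
by move/eqP; rewrite expf_eq0 (negbTE q_neq0) andbF.
Qed.

End L.


Section P.
Variable k : fieldType.

Lemma mxpowS d (A : 'M[k]_d) j : mxpow A j.+1 = A *m mxpow A j.
Proof. by []. Qed.

Lemma mxpowD d (A : 'M[k]_d) a b : mxpow A (a + b) = mxpow A a *m mxpow A b.
Proof.
elim: a => [|a IH]; first by rewrite add0n /mxpow /= mul1mx.
by rewrite addSn !mxpowS IH mulmxA.
Qed.

Lemma mxpow_comm d (A : 'M[k]_d) j : A *m mxpow A j = mxpow A j *m A.
Proof.
have := mxpowD A j 1; rewrite addn1 mxpowS => ->.
by rewrite mxpowS /mxpow /= mulmx1.
Qed.

Lemma ZjX n (q : k) d (Z X : 'M[k]_d) j : wHmod n q Z X ->
  mxpow Z j *m X = q ^+ j *: (X *m mxpow Z j).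
Proof.
case=> _ hzx _; elim: j => [|j IH]; first by rewrite /mxpow /= mul1mx mulmx1 scale1r.
rewrite mxpowS -mulmxA IH -scalemxAr !mulmxA hzx -scalemxAl scalerA.
by rewrite exprS mulrC.
Qed.

Lemma mxpow_eig d (Z : 'M[k]_d) (v : 'M[k]_(d, 1)) l j :
  Z *m v = l *: v -> mxpow Z j *m v = l ^+ j *: v.
Proof.
move=> Zv; elim: j => [|j IH]; first by rewrite /mxpow /= mul1mx scale1r.
by rewrite mxpowS -mulmxA IH -scalemxAr Zv scalerA exprS mulrC.
Qed.

Lemma nz_entry m p (A : 'M[k]_(m, p)) : A != 0 -> exists r c, A r c != 0.
Proof.
move=> A0.
have : ~~ [forall r, forall c, A r c == 0].
  apply: contra A0 => /forallP h; apply/eqP/matrixP => r c; rewrite mxE.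
  exact/eqP/(forallP (h r) c).
rewrite negb_forall => /existsP [r]; rewrite negb_forall => /existsP [c] h.
by exists r, c.
Qed.

Lemma dA d (w : 'M[k]_(d, 1)) r : delta_mx 0 r *m w = (w r 0)%:M.
Proof. by rewrite -rowE [row r w]mx11_scalar mxE. Qed.

Lemma Ad d p (A : 'M[k]_(d, p)) c r : (A *m (delta_mx c 0 : 'M_(p, 1))) r 0 = A r c.
Proof. by rewrite -colE mxE. Qed.

Lemma shift_sum (V : zmodType) N (g : nat -> V) : g N = g 0%N ->
  \sum_(j < N) g j.+1 = \sum_(j < N) g j.
Proof.
move=> gN.
have h1 : \sum_(j < N.+1) g j = \sum_(j < N) g j + g N by rewrite big_ord_recr.
have h2 : \sum_(j < N.+1) g j = g 0%N + \sum_(j < N) g j.+1 by rewrite big_ord_recl.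
have := etrans (esym h1) h2; rewrite /= gN addrC => /addrI <-.
by apply: eq_bigr.
Qed.
End P.

Section Inv.
Variable k : fieldType.
Variables (n : nat) (q : k).
Hypothesis hn : (1 <= n)%N.
Hypothesis hq : (2 * n).-primitive_root q.
Variables (d : nat) (Z X : 'M[k]_d).
Hypothesis hw : wHmod n q Z X.
Hypothesis hT : mxpow Z (2 * n) = 1%:M.

Definition Sm (mu : k) := \sum_(j < 2 * n) mu ^+ j *: mxpow Z j.

Lemma ZS mu l : mu * l = 1 -> mu ^+ (2 * n) = 1 -> Z *m Sm mu = l *: Sm mu.
Proof.
move=> hml hm; rewrite /Sm mulmx_sumr scaler_sumr.
transitivity (\sum_(j < 2 * n) l *: (mu ^+ j.+1 *: mxpow Z j.+1)).
  apply: eq_bigr => j _; rewrite -scalemxAr -mxpowS scalerA; congr (_ *: _).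
  by rewrite exprSr mulrC -mulrA hml mulr1.
rewrite -!scaler_sumr; congr (_ *: _).
rewrite (@shift_sum _ (2 * n) (fun j : nat => mu ^+ j *: mxpow Z j)) //.
by rewrite hm hT expr0.
Qed.

Lemma SZ mu : Sm mu *m Z = Z *m Sm mu.
Proof.
rewrite /Sm mulmx_suml mulmx_sumr; apply: eq_bigr => j _.
by rewrite -scalemxAl -scalemxAr mxpow_comm.
Qed.

Lemma Sv mu l (v : 'M[k]_(d, 1)) : mu * l = 1 -> Z *m v = l *: v ->
  Sm mu *m v = (2 * n)%:R *: v.
Proof.
move=> hml Zv; rewrite /Sm mulmx_suml.
rewrite (eq_bigr (fun _ => v)) ?sumr_const ?card_ord ?scaler_nat // => j _.
by rewrite -scalemxAl (mxpow_eig _ Zv) scalerA -exprMn hml expr1n scale1r.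
Qed.

Lemma geo (j : 'I_(2 * n)) : (0 < j)%N -> \sum_(i < 2 * n) (q^-1 ^+ j) ^+ i = 0.
Proof.
move=> j0; set w := q^-1 ^+ j.
have wN : w ^+ (2 * n) = 1 by rewrite /w exprAC exprVn (prim_expr_order hq) invr1 expr1n.
have w1 : w != 1.
  rewrite /w exprVn invr_eq1 -(prim_order_dvd hq); apply/negP => /(dvdn_leq j0).
  by rewrite leqNgt ltn_ord.
have := subrX1 w (2 * n); rewrite wN subrr => /esym/eqP.
by rewrite mulf_eq0 subr_eq0 (negbTE w1) /= => /eqP.
Qed.

Lemma sumS : \sum_(i < 2 * n) Sm (q^-1 ^+ i) = (2 * n)%:R *: 1%:M.
Proof.
rewrite /Sm exchange_big /=.
have h0 : (0 < 2 * n)%N by rewrite muln_gt0.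
rewrite (bigD1 (Ordinal h0)) //= [X in _ + X]big1 ?addr0.
  by rewrite -scaler_suml (eq_bigr (fun _ => 1)) ?sumr_const ?card_ord // => i _; rewrite expr0.
move=> j hj; rewrite -scaler_suml.
rewrite (eq_bigr (fun i : 'I_(2 * n) => (q^-1 ^+ j) ^+ i)); last by move=> i _; rewrite exprAC.
rewrite geo ?scale0r // lt0n; apply: contra hj => /eqP j0.
by apply/eqP/val_inj.
Qed.


Hypothesis hchar : [pchar k] =i pred0.

Lemma N_neq0 : (2 * n)%:R != 0 :> k.
Proof. by rewrite (pcharf0P _).1 // muln_eq0 /= -lt0n hn. Qed.

Lemma left_eig (w : 'M[k]_(d, 1)) nu r : nu ^+ (2 * n) = 1 -> Z *m w = nu *: w ->
  w r 0 != 0 -> exists f : 'M[k]_(1, d), f *m Z = nu *: f /\ f *m w = 1%:M.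
Proof.
move=> hnu Zw wr.
have nu0 : nu != 0.
  apply/eqP => e; move: hnu; rewrite e expr0n muln_eq0 /= eqn0Ngt hn /= => /eqP.
  by rewrite eq_sym oner_eq0.
have hml : nu^-1 * nu = 1 by rewrite mulVf.
have hm : nu^-1 ^+ (2 * n) = 1 by rewrite exprVn hnu invr1.
exists (((2 * n)%:R * w r 0)^-1 *: (delta_mx 0 r *m Sm nu^-1)); split.
- by rewrite -scalemxAl -mulmxA SZ (ZS hml hm) -scalemxAr !scalerA mulrC.
- rewrite -scalemxAl -mulmxA (Sv hml Zw) -scalemxAr dA scalerA scale_scalar_mx -mulrA.
  by rewrite mulVf // mulf_neq0 // N_neq0.
Qed.

Lemma exists_i (Y : 'M[k]_d) : Y != 0 ->
  exists i : 'I_(2 * n), exists r c, (Y *m Sm (q^-1 ^+ i)) r c != 0.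
Proof.
move=> Y0.
have : Y *m \sum_(i < 2 * n) Sm (q^-1 ^+ i) != 0.
  by rewrite sumS -scalemxAr mulmx1 scalemx_eq0 negb_or N_neq0.
rewrite mulmx_sumr.
case: (boolP [exists i : 'I_(2 * n), Y *m Sm (q^-1 ^+ i) != 0]).
  by case/existsP => i /nz_entry [r [c h]] _; exists i, r, c.
rewrite negb_exists => /forallP h; rewrite big1 ?eqxx // => i _.
by apply/eqP; move: (h i); rewrite negbK.
Qed.

End Inv.

Section Build.
Variable k : fieldType.
Variables (n : nat) (q : k) (d : nat) (Z X : 'M[k]_d).
Hypothesis hw : wHmod n q Z X.
Hypothesis hind : ~ mod_decomposable n q Z X.

Lemma one_neq0 m : (0 < m)%N -> (1%:M : 'M[k]_m) != 0.
Proof.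
case: m => // m _; apply/eqP => /matrixP/(_ ord0 ord0).
by rewrite !mxE /= => /eqP; rewrite oner_eq0.
Qed.

Lemma PQ1 m (P : 'M[k]_(d, m)) (Q : 'M[k]_(m, d)) : (0 < m)%N -> Q *m P = 1%:M ->
  Z *m (P *m Q) = (P *m Q) *m Z -> X *m (P *m Q) = (P *m Q) *m X -> P *m Q = 1%:M.
Proof.
move=> m0 QP hZ hX; case: (eqVneq (P *m Q) 1%:M) => // ne1; exfalso; apply: hind.
apply: (decomp hw _ hZ hX _ ne1).
- by rewrite mulmxA -(mulmxA P) QP mulmx1.
- apply/negP => /eqP PQ0; move: (one_neq0 m0); rewrite -QP.
  have -> : Q *m P = (Q *m P) *m (Q *m P) by rewrite QP mulmx1.
  by rewrite mulmxA -(mulmxA Q) PQ0 mulmx0 mul0mx eqxx.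
Qed.

Lemma idem01 (E : 'M[k]_d) : E *m E = E -> Z *m E = E *m Z -> X *m E = E *m X ->
  E = 0 \/ E = 1%:M.
Proof.
move=> EE hZ hX; case: (eqVneq E 0) => [->|E0]; first by left.
case: (eqVneq E 1%:M) => [->|E1]; first by right.
by case: hind; apply: (decomp hw EE hZ hX E0 E1).
Qed.

Lemma build1 (v : 'M[k]_(d, 1)) (f : 'M[k]_(1, d)) l :
  f *m v = 1%:M -> Z *m v = l *: v -> f *m Z = l *: f -> X *m v = 0 -> f *m X = 0 ->
  mod_iso Z X (l%:M : 'M_1) 0.
Proof.
move=> fv Zv fZ Xv fX.
have PQ : v *m f = 1%:M.
  apply: PQ1 => //.
    by rewrite !mulmxA Zv -mulmxA fZ -scalemxAl -scalemxAr.
  by rewrite !mulmxA Xv -mulmxA fX mulmx0 mul0mx.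
exists v, f; split => //.
- by rewrite mul_mx_scalar.
- by rewrite Xv mulmx0.
Qed.

Lemma build2 (v : 'M[k]_(d, 1)) (f : 'M[k]_(1, d)) l l' :
  f *m v = 0 -> f *m (X *m v) = 1%:M -> Z *m v = l *: v ->
  Z *m (X *m v) = l' *: (X *m v) -> f *m Z = l' *: f -> f *m X *m Z = l *: (f *m X) ->
  mod_iso Z X (block_mx l%:M 0 0 l'%:M : 'M_(1 + 1)) (block_mx 0 0 1%:M 0 : 'M_(1 + 1)).
Proof.
case: hw => _ _ hxx.
move=> fv fXv Zv ZXv fZ fXZ.
have XXv : X *m (X *m v) = 0 by rewrite mulmxA hxx mul0mx.
have fXX : f *m X *m X = 0 by rewrite -mulmxA hxx mulmx0.
have fXv' : f *m X *m v = 1%:M by rewrite -mulmxA.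
have fXXv : f *m X *m (X *m v) = 0 by rewrite mulmxA fXX mul0mx.
have [w hw'] : exists w, X *m v = w by exists (X *m v).
rewrite hw' in fXv XXv fXXv ZXv.
have [a ha] : exists a, f *m X = a by exists (f *m X).
rewrite ha in fXv' fXX fXXv fXZ.
move: fXv XXv fXXv ZXv fXv' fXX fXZ => fw Xw aw Zw av aX aZ.
have PQ : row_mx v w *m col_mx a f = 1%:M.
  apply: PQ1 => //.
  - by rewrite mul_col_row av aw fv fw -scalar_mx_block.
  - rewrite mul_row_col mulmxDr mulmxDl !mulmxA Zv Zw -!mulmxA aZ fZ.
    by rewrite -!scalemxAl -!scalemxAr.
  - rewrite mul_row_col mulmxDr mulmxDl !mulmxA hw' Xw mul0mx addr0 -!mulmxA aX ha.
    by rewrite mulmx0 add0r.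
exists (row_mx v w), (col_mx a f); split => //.
- by rewrite mul_col_row av aw fv fw -scalar_mx_block.
- by rewrite mul_mx_row mul_row_block !mulmx0 addr0 add0r !mul_mx_scalar Zv Zw.
- by rewrite mul_mx_row mul_row_block !mulmx0 mulmx1 add0r addr0 hw' Xw.
Qed.
End Build.

Section Main.
Variable k : fieldType.
Variables (n : nat) (q : k).
Hypothesis hn : (1 <= n)%N.
Hypothesis hq : (2 * n).-primitive_root q.
Hypothesis hchar : [pchar k] =i pred0.

Lemma complete d (Z X : 'M[k]_d) : mod_indecomposable n q Z X ->
  [\/ exists i : 'I_(2 * n), mod_iso Z X (S_Z q i) (S_X k),
      exists i : 'I_(2 * n), mod_iso Z X (M_Z q i) (M_X k),
      mod_iso Z X (N0_Z k) (N0_X k)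
    | mod_iso Z X (N1_Z k) (N1_X k)].
Proof.
case=> hw d0 hind.
have hw' := hw; case: hw' => hp hzx hxx.
have N0 : (0 < 2 * n)%N by rewrite muln_gt0.
have per m : (0 < m)%N -> mxpow Z (m + 2 * n) = mxpow Z m.
  case: m => // m _.
  have -> : (m.+1 + 2 * n = m + (2 * n + 1))%N by rewrite addn1 addnS addSn.
  by rewrite mxpowD hp -mxpow_comm.
set T := mxpow Z (2 * n).
have TT : T *m T = T by rewrite /T -mxpowD per.
have TZ : Z *m T = T *m Z by rewrite /T mxpow_comm.
have TX : X *m T = T *m X by rewrite /T (ZjX _ hw) (prim_expr_order hq) scale1r.
case: (idem01 hw hind TT TZ TX) => [T0|T1].
-
  have Z0 : Z = 0 by rewrite -hp addn1 mxpowS -/T T0 mulmx0.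
  case: (eqVneq X 0) => [X0|X0].
  + apply: Or43.
    case: d Z X hw hind d0 {hp hzx hxx per T TT TZ TX T0} Z0 X0 => // d Z X hw hind _ Z0 X0.
    have h := @build1 _ n q _ Z X hw hind (delta_mx ord0 ord0) (delta_mx ord0 ord0) 0.
    rewrite raddf0 in h; apply: h.
    * by rewrite mul_delta_mx [delta_mx _ _]mx11_scalar mxE eqxx.
    * by rewrite Z0 mul0mx scale0r.
    * by rewrite Z0 mulmx0 scale0r.
    * by rewrite X0 mul0mx.
    * by rewrite X0 mulmx0.
  + apply: Or44.
    have [r [c hrc]] := nz_entry X0.
    set v : 'M[k]_(d, 1) := delta_mx c 0.
    set h : 'M[k]_(1, d) := (X r c)^-1 *: delta_mx 0 r.
    have hXv : h *m (X *m v) = 1%:M.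
      by rewrite -scalemxAl dA Ad scale_scalar_mx mulVf.
    set s := (h *m v) 0 0.
    have := @build2 _ n q _ Z X hw hind v (h - s *: (h *m X)) 0 0.
    rewrite raddf0 block_mx0 -M_XE; apply.
    * by rewrite mulmxBl -(scalemxAl s) -mulmxA hXv scalemx1 {1}[h *m v]mx11_scalar subrr.
    * by rewrite mulmxBl -(scalemxAl s) !mulmxA -(mulmxA h X X) hxx mulmx0 !mul0mx scaler0 subr0 -mulmxA.
    * by rewrite Z0 mul0mx scale0r.
    * by rewrite Z0 mul0mx scale0r.
    * by rewrite Z0 mulmx0 scale0r.
    * by rewrite Z0 mulmx0 scale0r.
-
  have hT : mxpow Z (2 * n) = 1%:M by [].
  have q0 := q_neq0 hn hq.
  have hmu (i : nat) : (q^-1 ^+ i) * q ^+ i = 1 by rewrite exprVn mulVf // expf_neq0.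
  have hmuN (i : nat) : (q^-1 ^+ i) ^+ (2 * n) = 1.
    by rewrite exprAC exprVn (prim_expr_order hq) invr1 expr1n.
  have hlN (i : nat) : (q ^+ i) ^+ (2 * n) = 1.
    by rewrite exprAC (prim_expr_order hq) expr1n.
  case: (eqVneq X 0) => [X0|X0].
  + apply: Or41.
    have [i [r [c]]] := exists_i hn hq Z hchar (@one_neq0 k _ d0).
    rewrite mul1mx => hrc; exists i.
    set v : 'M[k]_(d, 1) := Sm n Z (q^-1 ^+ i) *m delta_mx c 0.
    have Zv : Z *m v = q ^+ i *: v.
      by rewrite /v mulmxA (ZS hT (hmu i) (hmuN i)) -scalemxAl.
    have vr : v r 0 != 0 by rewrite /v Ad.
    have [f [fZ fv]] := left_eig hn hT hchar (hlN i) Zv vr.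
    apply: (build1 hw hind fv Zv fZ).
    * by rewrite X0 mul0mx.
    * by rewrite X0 mulmx0.
  + apply: Or42.
    have [i [r [c]]] := exists_i hn hq Z hchar X0.
    move=> hrc; exists i.
    set v : 'M[k]_(d, 1) := Sm n Z (q^-1 ^+ i) *m delta_mx c 0.
    set l := q ^+ i.
    have Zv : Z *m v = l *: v.
      by rewrite /v mulmxA (ZS hT (hmu i) (hmuN i)) -scalemxAl.
    have Xvr : (X *m v) r 0 != 0 by rewrite /v mulmxA Ad.
    have ZXv : Z *m (X *m v) = (q * l) *: (X *m v).
      by rewrite mulmxA hzx -scalemxAl -mulmxA Zv -scalemxAr scalerA.
    have hql : (q * l) ^+ (2 * n) = 1 by rewrite exprMn (prim_expr_order hq) hlN mul1r.
    have [f [fZ fXv]] := left_eig hn hT hchar hql ZXv Xvr.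
    have fv : f *m v = 0.
      have h : (q * l - l) *: (f *m v) = 0.
        by rewrite scalerBl scalemxAl -fZ -mulmxA Zv -scalemxAr subrr.
      move/eqP: h; rewrite scalemx_eq0 => /orP [|/eqP //].
      rewrite -{2}[l]mul1r -mulrBl mulf_eq0 subr_eq0 (negbTE (q_neq1 hn hq)) /=.
      by rewrite expf_eq0 (negbTE q0) andbF.
    have fXZ : f *m X *m Z = l *: (f *m X).
      apply: (scalerI q0).
      rewrite scalemxAr -mulmxA -scalemxAr -hzx mulmxA fZ -scalemxAl scalerA //.
    have := build2 hw hind fv fXv Zv ZXv fZ fXZ.
    by rewrite -M_XE /l -exprS -(addn1 i) -M_ZE.
Qed.
End Main.

End Helpers.
Import Helpers.

Theorem proposition4p1 (k : closedFieldType) (hchar : [pchar k] =i pred0)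
  (n : nat) (hn : (1 <= n)%N) (q : k) (hq : (2 * n).-primitive_root q)
  (a : k) (ha : a != 0) :
  (* each listed module is an indecomposable wH_{4n}-module *)
  [/\ (forall i : 'I_(2 * n), mod_indecomposable n q (S_Z q i) (S_X k)),
      (forall i : 'I_(2 * n), mod_indecomposable n q (M_Z q i) (M_X k)),
      mod_indecomposable n q (N0_Z k) (N0_X k)
    & mod_indecomposable n q (N1_Z k) (N1_X k)] /\
  (* pairwise non-isomorphic *)
  [/\ (forall i j : 'I_(2 * n), mod_iso (S_Z q i) (S_X k) (S_Z q j) (S_X k) -> i = j),
      (forall i j : 'I_(2 * n), mod_iso (M_Z q i) (M_X k) (M_Z q j) (M_X k) -> i = j)
    & (forall i j : 'I_(2 * n), ~ mod_iso (S_Z q i) (S_X k) (M_Z q j) (M_X k))] /\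
  [/\
      (forall i : 'I_(2 * n), ~ mod_iso (S_Z q i) (S_X k) (N0_Z k) (N0_X k)),
      (forall i : 'I_(2 * n), ~ mod_iso (S_Z q i) (S_X k) (N1_Z k) (N1_X k)),
      (forall i : 'I_(2 * n), ~ mod_iso (M_Z q i) (M_X k) (N0_Z k) (N0_X k)),
      (forall i : 'I_(2 * n), ~ mod_iso (M_Z q i) (M_X k) (N1_Z k) (N1_X k))
    & ~ mod_iso (N0_Z k) (N0_X k) (N1_Z k) (N1_X k)] /\
  (* completeness *)
  (forall (d : nat) (Z X : 'M[k]_d), mod_indecomposable n q Z X ->
     [\/ exists i : 'I_(2 * n), mod_iso Z X (S_Z q i) (S_X k),
         exists i : 'I_(2 * n), mod_iso Z X (M_Z q i) (M_X k),
         mod_iso Z X (N0_Z k) (N0_X k)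
       | mod_iso Z X (N1_Z k) (N1_X k)]).

Proof.
have MX0 : M_X k != 0.
  apply/eqP => /matrixP/(_ 1 0); rewrite !mxE /= => /eqP; by rewrite oner_eq0.
split; [|split; [|split]].
- split.
  + by move=> i; apply: indec1; apply: wH_S.
  + by move=> i; apply: indec2 => //; apply: wH_M.
  + by apply: indec1; apply: wH_N0.
  + by apply: indec2 => //; apply: wH_N1.
- split.
  + exact: S_inj.
  + exact: M_inj.
  + by move=> i j /iso_dim.
- split.
  + by move=> i; apply: (S_not_N0 hn hq).
  + by move=> i /iso_dim.
  + by move=> i /iso_dim.
  + by move=> i; apply: (M_not_N1 hn hq).
  + by move/iso_dim.
- by move=> d Z X; apply: complete.
Qed.
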